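(* Let $F$ be a function from the pure states of $\mathcal{H}'$ to $[0,\infty)$ that is an ensemble Z$_2$-frameness monotone, i.e. for every pure state $|\psi\rangle$ and every Z$_2$-invariant measurement $\{\mathcal{E}_\mu\}$ such that each outcome $\mu$ with $w_\mu:=\mathrm{Tr}\,\mathcal{E}_\mu(|\psi\rangle\langle\psi|)>0$ satisfies $\mathcal{E}_\mu(|\psi\rangle\langle\psi|)=w_\mu|\phi_\mu\rangle\langle\phi_\mu|$ for a pure state $|\phi_\mu\rangle$, one has $\sum_\mu w_\mu F(|\phi_\mu\rangle)\le F(|\psi\rangle)$. Then there is a non-decreasing concave function $f:[0,1]\to\mathbb{R}$ such that $F(|\psi\rangle)=f(\mathcal{C}(|\psi\rangle))$ for every pure state $|\psi\rangle\in\mathcal{H}'$.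
   Context: $\mathcal{H}'$ is a two-dimensional Hilbert space with orthonormal basis $|0\rangle,|1\rangle$; $\pi=|0\rangle\langle0|-|1\rangle\langle1|$. A Z$_2$-invariant operation is a completely positive, trace-nonincreasing linear map $\mathcal{E}$ on operators on $\mathcal{H}'$ with $\mathcal{E}(\pi X\pi)=\pi\mathcal{E}(X)\pi$ for all $X$. A Z$_2$-invariant measurement is a (countable) family $\{\mathcal{E}_\mu\}$ of Z$_2$-invariant operations whose sum is trace-preserving. For a pure state $|\chi\rangle$, $\mathcal{C}(|\chi\rangle)=2\min\{|\langle0|\chi\rangle|^2,|\langle1|\chi\rangle|^2\}\in[0,1]$. *)

(* Defs.v *)
From mathcomp Require Import all_boot all_algebra.
From mathcomp Require Import classical_sets reals topology normedtype sequences.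
From mathcomp Require Export complex.
Import GRing.Theory Num.Theory numFieldNormedType.Exports.
Local Open Scope ring_scope.
Local Open Scope classical_set_scope.

Set Implicit Arguments.
Unset Strict Implicit.
Unset Printing Implicit Defensive.

Section Defs.
Variable R : realType.
Local Notation C := R[i].
Local Notation mat := 'M[C]_2.
Local Notation vec := 'cV[C]_2.

Definition ofR (x : R) : C := Complex x 0.

Definition psdk (T : finType) (A : T -> T -> C) : Prop :=
  forall v : T -> C, 0 <= \sum_i \sum_j (Num.conj (v i)) * A i j * v j.

Definition psd (A : mat) : Prop := psdk (fun i j => A i j).

Definition is_linear_map (E : mat -> mat) : Prop :=
  forall (a : C) (X Y : mat), E (a *: X + Y) = a *: E X + E Y.

(* id_n (x) E acting on operators on C^n (x) H', written as kernels on
   'I_n * 'I_2 : E is applied to each 2x2 block *)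
Definition ampl (n : nat) (E : mat -> mat)
  (X : 'I_n * 'I_2 -> 'I_n * 'I_2 -> C) : 'I_n * 'I_2 -> 'I_n * 'I_2 -> C :=
  fun p q => E (\matrix_(k, l) X (p.1, k) (q.1, l)) p.2 q.2.

Definition completely_positive (E : mat -> mat) : Prop :=
  forall (n : nat) (X : 'I_n * 'I_2 -> 'I_n * 'I_2 -> C),
    psdk X -> psdk (ampl E X).

Definition trace_nonincreasing (E : mat -> mat) : Prop :=
  forall X : mat, psd X -> \tr (E X) <= \tr X.

Definition operation (E : mat -> mat) : Prop :=
  [/\ is_linear_map E, completely_positive E & trace_nonincreasing E].

Definition piZ : mat := \matrix_(i, j)
  (if i == j then (if i == ord0 then 1 else -1) else 0).

Definition Z2_invariant (E : mat -> mat) : Prop :=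
  forall X : mat, E (piZ *m X *m piZ) = piZ *m E X *m piZ.

Definition Z2_operation (E : mat -> mat) : Prop :=
  operation E /\ Z2_invariant E.

(* A countable family of operations indexed by nat (finite families are
   padded by the zero operation) whose sum is trace preserving. *)
Definition Z2_measurement (E : nat -> mat -> mat) : Prop :=
  (forall mu, Z2_operation (E mu)) /\
  (forall X : mat, psd X ->
     (fun N : nat => \sum_(mu < N) complex.Re (\tr (E mu X))) @ \oo
       --> (complex.Re (\tr X) : R^o)).

Definition bra (v : vec) : 'rV[C]_2 := map_mx Num.conj v^T.
Definition proj (v : vec) : mat := v *m bra v.
Definition pure (v : vec) : Prop := (bra v *m v) ord0 ord0 = 1.

Definition coh (v : vec) : R :=
  2 * Num.min (complex.Re (`|v ord0 ord0| ^+ 2))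
              (complex.Re (`|v ord_max ord0| ^+ 2)).

Definition weight (E : nat -> mat -> mat) (mu : nat) (psi : vec) : R :=
  complex.Re (\tr (E mu (proj psi))).

Definition in01 (x : R) : Prop := 0 <= x <= 1.

Definition nondecreasing01 (f : R -> R) : Prop :=
  forall x y, in01 x -> in01 y -> x <= y -> f x <= f y.

Definition concave01 (f : R -> R) : Prop :=
  forall x y t, in01 x -> in01 y -> in01 t ->
    t * f x + (1 - t) * f y <= f (t * x + (1 - t) * y).

End Defs.

(* Main.v *)
Require Import Defs.
From mathcomp Require Import all_boot all_order all_algebra.
From mathcomp Require Import classical_sets reals complex topology normedtype sequences.
From mathcomp Require Import ring lra.
Import Order.TTheory GRing.Theory Num.Theory numFieldNormedType.Exports.
Local Open Scope ring_scope.

Section Aux.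
Variable R : realType.
Local Notation C := R[i].
Local Notation mat := 'M[C]_2.
Local Notation vec := 'cV[C]_2.

Lemma ord2P (i : 'I_2) : i = ord0 \/ i = ord_max.
Proof. case: i => [[|[|k]] Hi]; [left|right|by []]; exact/val_inj. Qed.

Lemma sum2 (V : nmodType) (F : 'I_2 -> V) : \sum_(i < 2) F i = F ord0 + F ord_max.
Proof. rewrite big_ord_recr big_ord1; congr (F _ + _); exact/val_inj. Qed.

Definition sw (b : bool) (i : 'I_2) : 'I_2 :=
  if b then (if i == ord0 then ord_max else ord0) else i.

Lemma swK b : involutive (sw b).
Proof. by move=> i; case: b; case: (ord2P i) => -> . Qed.

Definition sg (i : 'I_2) : C := if i == ord0 then 1 else -1.

Lemma sg_sw b i j : sg (sw b i) * sg (sw b j) = sg i * sg j.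
Proof. case: b; case: (ord2P i) => ->; case: (ord2P j) => ->; rewrite /sg /sw /=; ring. Qed.

Lemma piZE (X : mat) i j : (piZ R *m X *m piZ R) i j = sg i * X i j * sg j.
Proof.
rewrite !mxE !sum2 !mxE !sum2 !mxE.
by case: (ord2P i) => ->; case: (ord2P j) => ->; rewrite /sg /=; ring.
Qed.

Definition opD (d : 'I_2 -> C) b (X : mat) : mat :=
  \matrix_(i, j) (d i * X (sw b i) (sw b j) * (d j)^*).

Lemma opD_Z2 d b : Z2_invariant (opD d b).
Proof.
move=> X; apply/matrixP => i j. rewrite (piZE (opD d b X)) [in LHS]mxE (piZE X) mxE.
transitivity (d i * X (sw b i) (sw b j) * (d j)^* * (sg (sw b i) * sg (sw b j))); first ring.
rewrite sg_sw; ring.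
Qed.

Lemma opD_lin d b : is_linear_map (opD d b).
Proof. by move=> a X Y; apply/matrixP => i j; rewrite !mxE; ring. Qed.


Lemma opD_CP d b : completely_positive (opD d b).
Proof.
move=> n X HX v.
pose g := fun p : 'I_n * 'I_2 => (p.1, sw b p.2).
have gK : involutive g by case=> a k; rewrite /g /= swK.
pose w := fun p : 'I_n * 'I_2 => (d (sw b p.2))^* * v (p.1, sw b p.2).
have := HX w.
suff -> : \sum_p \sum_q (w p)^* * X p q * w q =
   \sum_p \sum_q (v p)^* * ampl (opD d b) X p q * v q by [].
rewrite (reindex_inj (inv_inj gK)); apply eq_bigr => p _.
rewrite (reindex_inj (inv_inj gK)); apply eq_bigr => q _.
case: p => a k; case: q => c l; rewrite /w /g /ampl /= !swK !mxE /=.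
rewrite !rmorphM. set z := (_ (d k)^*). have -> : z = d k by exact: conjCK. ring.
Qed.

Lemma psd_diag (X : mat) i : psd X -> 0 <= X i i.
Proof.
move=> H; have := H (fun k => if k == i then 1 else 0).
rewrite !sum2; case: (ord2P i) => -> /=;
rewrite !(rmorph0, rmorph1, mul0r, mulr0, mul1r, mulr1, addr0, add0r) //.
Qed.

Lemma opD_tr d b : (forall i, d i * (d i)^* <= 1) -> trace_nonincreasing (opD d b).
Proof.
move=> Hd X HX.
have key k i : d i * X k k * (d i)^* <= X k k.
  rewrite -subr_ge0 (_ : _ - _ = (1 - d i * (d i)^*) * X k k); last by ring.
  rewrite mulrC.
  by apply: mulr_ge0; [exact: psd_diag | rewrite subr_ge0].
rewrite /mxtrace !sum2 !mxE.
by case: b; rewrite /sw /=; [rewrite [X ord0 ord0 + _]addrC|]; apply: lerD; apply: key.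
Qed.


Definition dz : 'I_2 -> C := fun _ => 0.
Definition Meas d0 d1 b : nat -> mat -> mat := fun mu =>
  opD (if mu == 0%N then d0 else if mu == 1%N then d1 else dz) b.

Lemma ReD (x y : C) : complex.Re (x + y) = complex.Re x + complex.Re y.
Proof. by case: x; case: y. Qed.

Lemma tr_opD_sum d0 d1 b (X : mat) :
  (forall i, d0 i * (d0 i)^* + d1 i * (d1 i)^* = 1) ->
  \tr (opD d0 b X) + \tr (opD d1 b X) = \tr X.
Proof.
move=> Hd; rewrite /mxtrace !sum2 !mxE.
transitivity ((d0 ord0 * (d0 ord0)^* + d1 ord0 * (d1 ord0)^*) * X (sw b ord0) (sw b ord0)
  + (d0 ord_max * (d0 ord_max)^* + d1 ord_max * (d1 ord_max)^*) * X (sw b ord_max) (sw b ord_max)).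
  by ring.
by rewrite !Hd !mul1r; case: b; rewrite /sw //= addrC.
Qed.

Lemma tr_dz b (X : mat) : \tr (opD dz b X) = 0.
Proof. by rewrite /mxtrace big1 // => i _; rewrite mxE /dz !mul0r. Qed.

Lemma Meas_ok d0 d1 b : (forall i, d0 i * (d0 i)^* + d1 i * (d1 i)^* = 1) ->
  Z2_measurement (Meas d0 d1 b).
Proof.
move=> Hd; split.
  move=> mu; split; last exact: opD_Z2.
  split; [exact: opD_lin | exact: opD_CP | apply: opD_tr] => i.
  case: ifP => _; first by rewrite -(Hd i) lerDl mul_conjC_ge0.
  case: ifP => _; first by rewrite -(Hd i) lerDr mul_conjC_ge0.
  by rewrite /dz mul0r ler01.
move=> X HX; apply: cvg_near_cst; exists 2%N => // N /= HN.
rewrite -(big_mkord xpredT (fun mu => complex.Re (\tr (Meas d0 d1 b mu X)))).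
rewrite (big_cat_nat (n := 2)) //= [Y in _ + Y]big1_seq ?addr0; last first.
  move=> mu /andP[_]; rewrite mem_index_iota => /andP[H2 _].
  rewrite /Meas; case: mu H2 => [//|[//|mu _]].
  by rewrite /= tr_dz.
by rewrite !big_nat_recl //= big_geq // addr0 -ReD tr_opD_sum.
Qed.


Lemma projE (v : vec) i j : proj v i j = v i ord0 * (v j ord0)^*.
Proof. by rewrite /proj mxE big_ord1 !mxE. Qed.

Lemma pureE (v : vec) :
  pure v <-> v ord0 ord0 * (v ord0 ord0)^* + v ord_max ord0 * (v ord_max ord0)^* = 1.
Proof. by rewrite /pure mxE sum2 !mxE [_^* * _]mulrC [X in _ + X = _]mulrC. Qed.

Lemma tr_proj (v : vec) : pure v -> \tr (proj v) = 1.
Proof. by move/pureE <-; rewrite /mxtrace sum2 !projE. Qed.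

Lemma opD_proj d b (v : vec) :
  opD d b (proj v) = proj (\col_i (d i * v (sw b i) ord0)).
Proof. by apply/matrixP => i j; rewrite mxE !projE !mxE rmorphM; ring. Qed.

Definition monoF (F : vec -> R) :=
  forall (psi : 'cV[R[i]]_2) (E : nat -> 'M[R[i]]_2 -> 'M[R[i]]_2)
          (phi : nat -> 'cV[R[i]]_2),
     pure psi -> Z2_measurement E ->
     (forall mu, 0 < weight E mu psi ->
        pure (phi mu) /\
        E mu (proj psi) = ofR (weight E mu psi) *: proj (phi mu)) ->
     forall N : nat,
       \sum_(mu < N | 0 < weight E mu psi) weight E mu psi * F (phi mu)
         <= F psi.

Lemma weight_of d0 d1 b mu (psi phi : vec) w :
  pure phi -> Meas d0 d1 b mu (proj psi) = ofR w *: proj phi ->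
  weight (Meas d0 d1 b) mu psi = w.
Proof.
by move=> Hp E; rewrite /weight E mxtraceZ tr_proj // mulr1.
Qed.

Lemma ifw (w x : R) : 0 <= w -> (if 0 < w then w * x else 0) = w * x.
Proof. rewrite le0r => /orP[/eqP->|->] //; by rewrite ltxx mul0r. Qed.

Lemma apply_meas F (HF : monoF F) psi d0 d1 b phi0 phi1 w0 w1 :
  pure psi -> (forall i, d0 i * (d0 i)^* + d1 i * (d1 i)^* = 1) ->
  pure phi0 -> pure phi1 -> 0 <= w0 -> 0 <= w1 ->
  opD d0 b (proj psi) = ofR w0 *: proj phi0 ->
  opD d1 b (proj psi) = ofR w1 *: proj phi1 ->
  w0 * F phi0 + w1 * F phi1 <= F psi.
Proof.
move=> Hpsi Hd H0 H1 w0p w1p E0 E1.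
have W0 : weight (Meas d0 d1 b) 0 psi = w0 by exact: (@weight_of d0 d1 b 0%N psi phi0 w0 H0 E0).
have W1 : weight (Meas d0 d1 b) 1 psi = w1 by exact: (@weight_of d0 d1 b 1%N psi phi1 w1 H1 E1).
have W2 mu : weight (Meas d0 d1 b) mu.+2 psi = 0.
  by rewrite /weight /Meas /= tr_dz.
have := HF psi (Meas d0 d1 b) (fun mu => if mu == 0%N then phi0 else phi1)
  Hpsi (@Meas_ok d0 d1 b Hd) _ 2.
rewrite big_mkcond !big_ord_recr big_ord0 /= W0 W1 add0r !ifw //; apply.
move=> [|[|mu]] /=; rewrite ?W0 ?W1 ?W2 ?ltxx //.
Qed.


Lemma ofRM (a b : R) : ofR (a * b) = ofR a * ofR b.
Proof. by apply/eqP; rewrite eq_complex /= !mulr0 !mul0r subr0 addr0 !eqxx. Qed.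
Lemma ofRD (a b : R) : ofR (a + b) = ofR a + ofR b.
Proof. by apply/eqP; rewrite eq_complex /= addr0 !eqxx. Qed.
Lemma ofR1 : ofR 1 = 1 :> C. Proof. by []. Qed.
Lemma ofR0 : ofR 0 = 0 :> C. Proof. by []. Qed.
Lemma ofRJ (a : R) : (ofR a)^* = ofR a.
Proof. by apply/eqP; rewrite eq_complex /= oppr0 !eqxx. Qed.
Lemma ofR_inj (a b : R) : ofR a = ofR b -> a = b.
Proof. by case. Qed.

Lemma nrm_real (z : C) : z * z^* = ofR (complex.Re (z * z^*)).
Proof.
have /RRe_real H : z * z^* \is Num.real by apply: ger0_real; exact: mul_conjC_ge0.
by rewrite -[LHS]H.
Qed.

Lemma Re_nrm_ge0 (z : C) : 0 <= complex.Re (z * z^*).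
Proof. by have := mul_conjC_ge0 z; rewrite nrm_real /ofR lecE /= => /andP[]. Qed.

Definition vR (a b : R) : vec := \col_i ofR (if i == ord0 then a else b).
Definition dR (a b : R) : 'I_2 -> C := fun i => ofR (if i == ord0 then a else b).
Definition st (p : R) : vec := vR (Num.sqrt p) (Num.sqrt (1 - p)).

Lemma pure_vR a b : a * a + b * b = 1 -> pure (vR a b).
Proof. by move=> H; apply/pureE; rewrite !mxE /= !ofRJ -!ofRM -ofRD H. Qed.

Lemma pure_st p : 0 <= p <= 1 -> pure (st p).
Proof.
case/andP=> p0 p1; apply: pure_vR; rewrite -!expr2 !sqr_sqrtr ?subr_ge0 //.
by rewrite addrC subrK.
Qed.

Lemma opD_vR a0 a1 u0 u1 :
  opD (dR a0 a1) false (proj (vR u0 u1)) = proj (vR (a0 * u0) (a1 * u1)).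
Proof.
rewrite opD_proj; congr proj; apply/matrixP => i j; rewrite !mxE /dR /=.
by case: (ord2P i) => -> /=; rewrite ofRM.
Qed.

Lemma opD_vR_sw a0 a1 u0 u1 :
  opD (dR a0 a1) true (proj (vR u0 u1)) = proj (vR (a0 * u1) (a1 * u0)).
Proof.
rewrite opD_proj; congr proj; apply/matrixP => i j; rewrite !mxE /dR /=.
by case: (ord2P i) => -> /=; rewrite ofRM.
Qed.

Lemma proj_scale s a b : proj (vR (s * a) (s * b)) = ofR (s * s) *: proj (vR a b).
Proof.
apply/matrixP => i j; rewrite [RHS]mxE !projE !mxE !ofRJ.
by case: (ord2P i) => ->; case: (ord2P j) => -> /=; rewrite !ofRM; ring.
Qed.

Lemma nrm_dR a0 a1 b0 b1 :
  a0 * a0 + b0 * b0 = 1 -> a1 * a1 + b1 * b1 = 1 ->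
  forall i, dR a0 a1 i * (dR a0 a1 i)^* + dR b0 b1 i * (dR b0 b1 i)^* = 1.
Proof.
move=> H0 H1 i; rewrite /dR !ofRJ -!ofRM -ofRD.
by case: (ord2P i) => -> /=; rewrite ?H0 ?H1.
Qed.


Lemma s2 (z : R) : 0 <= z -> Num.sqrt z * Num.sqrt z = z.
Proof. by move=> z0; rewrite -expr2 sqr_sqrtr. Qed.

Lemma conjM (a b : C) : (a * b)^* = a^* * b^*.
Proof. exact: rmorphM. Qed.
Lemma conjV (a : C) : (a^-1)^* = (a^*)^-1.
Proof. exact: fmorphV. Qed.

Definition sZ (z : C) : C := ofR (Num.sqrt (complex.Re (z * z^*))).

Lemma sZ2 z : sZ z * sZ z = z * z^*.
Proof. by rewrite /sZ -ofRM s2 ?Re_nrm_ge0 // -nrm_real. Qed.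

Lemma sZJ z : (sZ z)^* = sZ z.
Proof. exact: ofRJ. Qed.

Lemma sZ_eq0 z : (sZ z == 0) = (z == 0).
Proof.
apply/idP/idP => [/eqP H|/eqP->].
  by rewrite -mul_conjC_eq0 -sZ2 H mul0r.
by rewrite /sZ rmorph0 mul0r sqrtr0.
Qed.

Lemma ph_norm (z w : C) : w * w^* = z * z^* ->
  (if z == 0 then 1 else w / sZ z) * (if z == 0 then 1 else w / sZ z)^* = 1.
Proof.
move=> E; case: ifP => [_|zn]; first by rewrite rmorph1 mulr1.
have sn : sZ z != 0 by rewrite sZ_eq0 zn.
rewrite conjM conjV sZJ.
transitivity ((w * w^*) * ((sZ z)^-1 * (sZ z)^-1)); first by ring.
by rewrite -invfM sZ2 E divff // -sZ2 mulf_neq0.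
Qed.

Lemma ph_fw (z : C) : (if z == 0 then 1 else z^* / sZ z) * z = sZ z.
Proof.
case: ifP => [/eqP->|zn]; first by apply/esym/eqP; rewrite mulr0 sZ_eq0.
have sn : sZ z != 0 by rewrite sZ_eq0 zn.
rewrite mulrC mulrA -sZ2 mulrK //.
Qed.

Lemma ph_bw (z : C) : (if z == 0 then 1 else z / sZ z) * sZ z = z.
Proof.
case: ifP => [/eqP->|zn]; first by apply/eqP; rewrite mul1r sZ_eq0.
have sn : sZ z != 0 by rewrite sZ_eq0 zn.
by rewrite divfK.
Qed.

Lemma opD_zero b X : opD (dR 0 0) b X = 0.
Proof. by apply/matrixP => i j; rewrite !mxE /dR if_same ofR0 !mul0r. Qed.

Definition pp (psi : vec) i := complex.Re (psi i ord0 * (psi i ord0)^*).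

Lemma pp_sum psi : pure psi -> pp psi ord0 + pp psi ord_max = 1.
Proof.
move/pureE; rewrite (nrm_real (psi ord0 ord0)) (nrm_real (psi ord_max ord0)) -ofRD.
by move/ofR_inj.
Qed.

Lemma st_pp psi : pure psi -> st (pp psi ord0) = \col_i sZ (psi i ord0).
Proof.
move=> H; apply/matrixP => i j; rewrite !mxE /sZ.
case: (ord2P i) => -> //=.
by rewrite -(pp_sum psi H) addrC addKr.
Qed.

Section WithF.
Variable F : vec -> R.
Hypothesis HF : monoF F.
Definition h p := F (st p).

Lemma h_swap p : 0 <= p <= 1 -> h (1 - p) <= h p.
Proof.
move=> Hp; have Hp' : 0 <= 1 - p <= 1.
  by case/andP: Hp => ??; apply/andP; split; lra.
have := @apply_meas F HF (st p) (dR 1 1) (dR 0 0) true (st (1 - p)) (st p)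
  (1 * 1) (0 * 0) (@pure_st _ Hp) _ (@pure_st _ Hp') (@pure_st _ Hp).
rewrite !mul1r !mul0r addr0; apply.
- by apply: nrm_dR; rewrite mulr1 mulr0 addr0.
- exact: ler01.
- exact: lexx.
- rewrite /st opD_vR_sw !mul1r ofR1 scale1r /st.
  by rewrite (_ : 1 - (1 - p) = p) //; ring.
- rewrite /st opD_vR_sw.
  have -> : ofR 0 = ofR (0 * 0) :> C by rewrite mulr0.
  by rewrite proj_scale mulr0 ofR0 !scale0r.
Qed.


Lemma frac_sum (a b c : R) : c != 0 -> a + b = c -> a / c + b / c = 1.
Proof. by move=> cn E; rewrite -mulrDl E divff. Qed.

Lemma coefE (u v p : R) : 0 <= u -> 0 <= v -> 0 < p ->
  Num.sqrt (u * v / p) * Num.sqrt p = Num.sqrt u * Num.sqrt v.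
Proof.
move=> u0 v0 p0; rewrite -sqrtrM; last by rewrite divr_ge0 ?mulr_ge0 // ltW.
by rewrite divfK ?gt_eqF // sqrtrM.
Qed.

Lemma h_split t x y : 0 < t < 1 -> 0 <= x <= 1 -> 0 <= y <= 1 ->
  0 < t * x + (1 - t) * y < 1 ->
  t * h x + (1 - t) * h y <= h (t * x + (1 - t) * y).
Proof.
move=> /andP[t0 t1] /andP[x0 x1] /andP[y0 y1].
set p := t * x + (1 - t) * y => /andP[p0 p1].
have q0 : 0 < 1 - p by lra.
have t0' : 0 <= t by lra. have t1' : 0 <= 1 - t by lra.
have x1' : 0 <= 1 - x by lra. have y1' : 0 <= 1 - y by lra.
pose A := Num.sqrt (t * x / p). pose B := Num.sqrt (t * (1 - x) / (1 - p)).
pose A' := Num.sqrt ((1 - t) * y / p). pose B' := Num.sqrt ((1 - t) * (1 - y) / (1 - p)).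
have Hp : 0 <= p <= 1 by apply/andP; split; lra.
have := @apply_meas F HF (st p) (dR A B) (dR A' B') false (st x) (st y)
  (Num.sqrt t * Num.sqrt t) (Num.sqrt (1 - t) * Num.sqrt (1 - t))
  (@pure_st _ Hp) _ (@pure_st x _) (@pure_st y _).
rewrite !s2 //; apply.
- have nn u v w : 0 <= u -> 0 <= v -> 0 < w -> 0 <= u * v / w.
    by move=> u0 v0 w0; rewrite divr_ge0 ?mulr_ge0 // ltW.
  have hA : 0 <= t * x / p by apply: nn.
  have hA' : 0 <= (1 - t) * y / p by apply: nn.
  have hB : 0 <= t * (1 - x) / (1 - p) by apply: nn.
  have hB' : 0 <= (1 - t) * (1 - y) / (1 - p) by apply: nn.
  have pn : p != 0 by rewrite gt_eqF.
  have qn : 1 - p != 0 by rewrite gt_eqF.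
  apply: nrm_dR; rewrite /A /A' /B /B' !s2 //.
    by apply: frac_sum => //; rewrite /p; ring.
  by apply: frac_sum => //; rewrite /p; ring.
- by apply/andP.
- by apply/andP.
- by [].
- by [].
- by rewrite /st opD_vR /A /B !coefE // proj_scale s2.
- by rewrite /st opD_vR /A' /B' !coefE // proj_scale s2.
Qed.


Lemma pp_range psi : pure psi -> 0 <= pp psi ord0 <= 1.
Proof.
move=> H; have := pp_sum psi H; have := Re_nrm_ge0 (psi ord_max ord0).
have := Re_nrm_ge0 (psi ord0 ord0); rewrite /pp => ? ? ?.
by apply/andP; split; lra.
Qed.

Lemma F_psi psi : pure psi -> F psi = h (pp psi ord0).
Proof.
move=> H; have Hr := pp_range psi H.
have Hst := @pure_st _ Hr.
pose df := fun i => if psi i ord0 == 0 then 1 else (psi i ord0)^* / sZ (psi i ord0).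
pose db := fun i => if psi i ord0 == 0 then 1 else (psi i ord0) / sZ (psi i ord0).
have nd (d : 'I_2 -> C) : (forall i, d i * (d i)^* = 1) ->
    forall i, d i * (d i)^* + dR 0 0 i * (dR 0 0 i)^* = 1.
  by move=> Hd i; rewrite Hd /dR if_same ofR0 mul0r addr0.
apply/le_anti/andP; split.
  have := @apply_meas F HF (st (pp psi ord0)) db (dR 0 0) false psi psi 1 0
     Hst _ H H ler01 (lexx 0).
  rewrite mul1r mul0r addr0; apply.
  - apply: nd => i; apply: ph_norm; by [].
  - rewrite opD_proj ofR1 scale1r; congr proj.
    apply/matrixP => i j; rewrite (st_pp psi H) !mxE /db /=.
    by rewrite (ord1 j) ph_bw.
  - by rewrite opD_zero ofR0 scale0r.
have := @apply_meas F HF psi df (dR 0 0) false (st (pp psi ord0)) psi 1 0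
     H _ Hst H ler01 (lexx 0).
rewrite mul1r mul0r addr0; apply.
- apply: nd => i; apply: ph_norm; by rewrite conjCK mulrC.
- rewrite opD_proj ofR1 scale1r; congr proj.
  apply/matrixP => i j; rewrite (st_pp psi H) !mxE /df /=.
  exact: ph_fw.
- by rewrite opD_zero ofR0 scale0r.
Qed.


Lemma h_sym p : 0 <= p <= 1 -> h (1 - p) = h p.
Proof.
move=> Hp; apply/le_anti/andP; split; first exact: h_swap.
have Hp' : 0 <= 1 - p <= 1 by case/andP: Hp => ??; apply/andP; split; lra.
by have := h_swap (1 - p) Hp'; rewrite (_ : 1 - (1 - p) = p) //; ring.
Qed.

Lemma pos_mix (t x y : R) : 0 < t < 1 -> 0 <= x -> 0 <= y -> x != y -> 0 < t * x + (1 - t) * y.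
Proof.
move=> /andP[t0 t1] x0 y0 xy.
have t1' : 0 < 1 - t by lra.
case: (ltrgt0P x) x0 => [xp _|//|x0' _].
  have := mulr_gt0 t0 xp; have := mulr_ge0 (ltW t1') y0; lra.
have yp : 0 < y by rewrite lt_neqAle y0 andbT; move: xy; rewrite x0' eq_sym.
have := mulr_gt0 t1' yp; rewrite x0' mulr0 add0r; lra.
Qed.

Lemma h_conc t x y : in01 t -> in01 x -> in01 y ->
  t * h x + (1 - t) * h y <= h (t * x + (1 - t) * y).
Proof.
move=> Ht Hx Hy; case/andP: (Ht) => t0 t1; case/andP: (Hx) => x0 x1; case/andP: (Hy) => y0 y1.
have [->|tn0] := eqVneq t 0.
  by rewrite !mul0r subr0 !mul1r !add0r.
have [->|tn1] := eqVneq t 1.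
  by rewrite subrr !mul0r !mul1r !addr0.
have [<-|xy] := eqVneq x y.
  have -> : t * x + (1 - t) * x = x by ring.
  have -> : t * h x + (1 - t) * h x = h x by ring.
  exact: lexx.
have Ht' : 0 < t < 1 by rewrite lt_def tn0 t0 /= lt_def eq_sym tn1 t1.
apply: h_split => //; apply/andP; split; first exact: pos_mix.
have xy' : 1 - x != 1 - y.
  by apply/eqP => E; move/eqP: xy; apply; lra.
have := @pos_mix t (1 - x) (1 - y) Ht'.
rewrite !subr_ge0 x1 y1 => /(_ isT isT xy').
have -> : t * (1 - x) + (1 - t) * (1 - y) = 1 - (t * x + (1 - t) * y) by ring.
move=> H; lra.
Qed.

End WithF.

End Aux.

Theorem theorem12 (R : realType) (F : 'cV[R[i]]_2 -> R) :
  (forall psi, pure psi -> 0 <= F psi) ->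
  (forall (psi : 'cV[R[i]]_2) (E : nat -> 'M[R[i]]_2 -> 'M[R[i]]_2)
          (phi : nat -> 'cV[R[i]]_2),
     pure psi -> Z2_measurement E ->
     (forall mu, 0 < weight E mu psi ->
        pure (phi mu) /\
        E mu (proj psi) = ofR (weight E mu psi) *: proj (phi mu)) ->
     forall N : nat,
       \sum_(mu < N | 0 < weight E mu psi) weight E mu psi * F (phi mu)
         <= F psi) ->
  exists f : R -> R,
    [/\ nondecreasing01 f, concave01 f &
        forall psi, pure psi -> F psi = f (coh psi)].
Proof.
move=> _ HF.
have HFm : monoF R F := HF.
exists (fun c => h R F (c / 2)); split.
- move=> x y /andP[x0 x1] /andP[y0 y1] xy /=.
  have [ex|xn1] := eqVneq x 1.
    have -> : y = 1 by apply/le_anti; rewrite y1 -ex xy.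
    by rewrite ex lexx.
  have q : 0 < 1 - x.
    have : x < 1 by rewrite lt_def eq_sym xn1 x1.
    lra.
  pose t := (1 - x / 2 - y / 2) / (1 - x).
  have ht : in01 t.
    apply/andP; split; first by apply: divr_ge0; lra.
    rewrite ler_pdivrMr // mul1r; lra.
  have E : t * (x / 2) + (1 - t) * (1 - x / 2) = y / 2.
    have -> : t * (x / 2) + (1 - t) * (1 - x / 2) = (1 - x / 2) - t * (1 - x) by field.
    by rewrite /t divfK ?gt_eqF //; ring.
  have hx : in01 (x / 2) by apply/andP; split; lra.
  have hx' : in01 (1 - x / 2) by apply/andP; split; lra.
  have := @h_conc R F HFm t (x / 2) (1 - x / 2) ht hx hx'.
  rewrite E (@h_sym R F HFm (x / 2) hx).
  by have -> : t * h R F (x / 2) + (1 - t) * h R F (x / 2) = h R F (x / 2) by ring.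
- move=> x y t Hx Hy Ht /=.
  have hx : in01 (x / 2) by case/andP: Hx => ? ?; apply/andP; split; lra.
  have hy : in01 (y / 2) by case/andP: Hy => ? ?; apply/andP; split; lra.
  have := @h_conc R F HFm t (x / 2) (y / 2) Ht hx hy.
  by have -> : t * (x / 2) + (1 - t) * (y / 2) = (t * x + (1 - t) * y) / 2 by ring.
- move=> psi Hpsi /=.
  rewrite (@F_psi R F HFm psi Hpsi) /coh !normCK.
  rewrite -/(pp R psi ord0) -/(pp R psi ord_max).
  rewrite mulrC mulKf ?pnatr_eq0 //.
  have Hs := pp_sum R psi Hpsi.
  have Hr := pp_range R psi Hpsi.
  have E1 : pp R psi ord_max = 1 - pp R psi ord0 by lra.
  rewrite E1; rewrite /Num.min /Order.min.
  by case: ifP => _ //; rewrite (@h_sym R F HFm _ Hr).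
Qed.
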